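(* Consider the weighted stochastic block model: there are $r$ latent communities labelled $1,\ldots,r$; each node $i$ is independently assigned a latent community $Z_i$ with $\mathbb{P}(Z_i=z)=p_z>0$ for $z=1,\ldots,r$; each unordered pair of distinct nodes $i\neq j$ carries a real-valued edge weight $X_{i,j}=X_{j,i}$, where, conditional on the community indicators, the edge weights are independent and $X_{i,j}$ has distribution function $F_{z_1,z_2}(x)=\mathbb{P}(X_{i,j}\le x\mid Z_i=z_1,Z_j=z_2)$. For a positive integer $q$ define, for distinct nodes $i,i_1,\ldots,i_q$, $$F_z^q(x_1,\ldots,x_q):=\mathbb{P}(X_{i,i_1}\le x_1,\ X_{i_1,i_2}\le x_2,\ \ldots,\ X_{i_1,i_q}\le x_q\mid Z_i=z),\qquad z=1,\ldots,r.$$ Suppose there exists a finite integer $q$ such that the functions $F_1^q,\ldots,F_r^q$ are linearly independent, and let $q_{\min}$ be the smallest such integer. If $q_{\min}$ is positive, then the weighted stochastic block model (the number of communities $r$, the community distribution $\boldsymbol{p}=(p_1,\ldots,p_r)'$, and the conditional distributions $F_{z_1,z_2}$) is nonparametrically identified from the distribution of the edge weights, up to relabeling of the latent communities.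
   Context: ''Nonparametrically identified up to relabeling'' means that any two weighted stochastic block models satisfying the assumptions and inducing the same joint distribution of observed edge weights (on sufficiently many nodes) have the same $r$ and have $(\boldsymbol{p},\{F_{z_1,z_2}\})$ equal up to a single permutation of the community labels, with no parametric restrictions imposed on the $F_{z_1,z_2}$. *)

(* Defs.v *)
From HB Require Import structures.
From mathcomp Require Import all_boot all_order all_algebra.
From mathcomp Require Import all_classical all_reals all_analysis.
Set Implicit Arguments. Unset Strict Implicit. Unset Printing Implicit Defensive.
Import Order.TTheory GRing.Theory Num.Theory.
Import numFieldNormedType.Exports.
Local Open Scope classical_set_scope.
Local Open Scope ring_scope.

Definition is_cdf (R : realType) (f : R -> R) : Prop :=
  [/\ {homo f : x y / x <= y},
      (forall y : R, f x @[x --> y^'+] --> f y),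
      f x @[x --> -oo] --> (0 : R) &
      f x @[x --> +oo] --> (1 : R)].

Definition is_wsbm (R : realType) (r : nat) (p : 'I_r -> R)
    (F : 'I_r -> 'I_r -> R -> R) : Prop :=
  [/\ (forall z, 0 < p z),
      \sum_(z < r) p z = 1,
      (forall z1 z2, is_cdf (F z1 z2)) &
      (forall z1 z2, F z1 z2 = F z2 z1)].

(* Joint CDF of the edge weights (X_{i,j})_{i<j} of a network with n nodes:
   P(X_{i,j} <= x i j for all i < j)
   = sum_z prod_i p_{z_i} prod_{i<j} F_{z_i,z_j}(x i j).
   (Only the entries x i j with i < j are used.) *)
Definition edge_cdf (R : realType) (r : nat) (p : 'I_r -> R)
    (F : 'I_r -> 'I_r -> R -> R) (n : nat) (x : 'I_n -> 'I_n -> R) : R :=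
  \sum_(z : {ffun 'I_n -> 'I_r})
     ((\prod_(i < n) p (z i)) *
      \prod_(i < n) \prod_(j < n | (i < j)%N) F (z i) (z j) (x i j)).

(* F_z^q(x_1,...,x_q) = P(X_{i,i1} <= x_1, X_{i1,i2} <= x_2, ..., X_{i1,iq} <= x_q | Z_i = z)
   for distinct nodes i, i1, ..., iq, written with q = q'.+1; the nodes
   i1,...,iq are indexed by 'I_q (ord0 = i1) and w are their communities.
   Computed by the law of total probability over the communities of i1..iq. *)
Definition Fq (R : realType) (r : nat) (p : 'I_r -> R)
    (F : 'I_r -> 'I_r -> R -> R) (q' : nat) (z : 'I_r) (x : 'I_q'.+1 -> R) : R :=
  \sum_(w : {ffun 'I_q'.+1 -> 'I_r})
     ((\prod_(k < q'.+1) p (w k)) *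
      (F z (w ord0) (x ord0) *
       \prod_(k < q'.+1 | (0 < k)%N) F (w ord0) (w k) (x k))).

Definition Fq_lin_indep (R : realType) (r : nat) (p : 'I_r -> R)
    (F : 'I_r -> 'I_r -> R -> R) (q' : nat) : Prop :=
  forall c : 'I_r -> R,
    (forall x : 'I_q'.+1 -> R, \sum_(z < r) c z * Fq p F z x = 0) ->
    forall z, c z = 0.

(* The assumptions of the proposition: a WSBM for which some finite q >= 1
   makes F_1^q..F_r^q linearly independent (so q_min exists and is positive). *)
Definition wsbm_assumptions (R : realType) (r : nat) (p : 'I_r -> R)
    (F : 'I_r -> 'I_r -> R -> R) : Prop :=
  is_wsbm p F /\ exists q' : nat, Fq_lin_indep p F q'.

(* Main.v *)
Require Import Defs.
From HB Require Import structures.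
From mathcomp Require Import all_boot all_order all_algebra.
From mathcomp Require Import all_classical all_reals all_analysis.
From mathcomp Require Import ring zify.
Set Implicit Arguments. Unset Strict Implicit. Unset Printing Implicit Defensive.
Import Order.TTheory GRing.Theory Num.Theory.
Import numFieldNormedType.Exports.
Local Open Scope classical_set_scope.
Local Open Scope ring_scope.

Definition lin_indep (R : realType) (Y : Type) (r : nat) (f : 'I_r -> Y -> R) :=
  forall c : 'I_r -> R, (forall y, \sum_(z < r) c z * f z y = 0) -> forall z, c z = 0.

Lemma dual (R : realType) (Y : Type) (r : nat) (f : 'I_r -> Y -> R) :
  lin_indep f -> forall z0, exists k (ys : 'I_k -> Y) (lam : 'I_k -> R),
    forall z, \sum_(i < k) lam i * f z (ys i) = (z == z0)%:R.
Proof.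
move=> hf z0.
pose M k (ys : 'I_k -> Y) : 'M[R]_(k, r) := \matrix_(i, z) f z (ys i).
pose P n := `[< exists k ys, \rank (M k ys) = n >].
have exP : exists n, P n.
  exists 0%N; apply/asboolP; exists 0%N, (fun i : 'I_0 => False_rect Y (ltac:(by case: i))).
  by apply/eqP; rewrite -leqn0 rank_leq_row.
have bnd : forall n, P n -> (n <= r)%N.
  by move=> n /asboolP [k [ys <-]]; apply: rank_leq_col.
case: (ex_maxnP exP bnd) => n /asboolP [k [ys hrk]] hmax.
have hnr : n = r.
  apply/eqP; rewrite eqn_leq -{1}hrk rank_leq_col /=.
  rewrite leqNgt; apply/negP => hlt.
  pose Kr := kermx (M k ys)^T.
  have hK : \rank Kr = (r - n)%N by rewrite mxrank_ker mxrank_tr hrk.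
  have : Kr != 0 by rewrite -mxrank_eq0 hK subn_eq0 -ltnNge.
  case/matrix0Pn => i [j hij].
  pose c : 'rV[R]_r := row i Kr.
  have hc : c *m (M k ys)^T = 0.
    by rewrite /c -row_mul; apply/rowP => l; rewrite (sub_kermxP (submx_refl Kr)) !mxE.
  have key : forall y, \sum_(z < r) c 0 z * f z y = 0.
    move=> y.
    pose v : 'rV[R]_r := \row_z f z y.
    pose ys' (l : 'I_(k + 1)) := match fintype.split l with inl a => ys a | inr _ => y end.
    have hM' : M _ ys' = col_mx (M k ys) v.
      apply/matrixP => a b; rewrite !mxE /ys'.
      by case: (fintype.split a) => [a'|a']; rewrite !mxE.
    have hle : (\rank (col_mx (M k ys) v) <= n)%N.
      by rewrite -hM'; apply: hmax; apply/asboolP; exists (k + 1)%N, ys'.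
    have hvM : (v <= M k ys)%MS.
      have hs : (M k ys <= M k ys + v)%MS by apply: addsmxSl.
      have [h1le heq] := mxrank_leqif_sup hs.
      have h2 : (M k ys + v <= M k ys)%MS.
        by rewrite -heq eqn_leq h1le /= hrk (fst (addsmxE (M k ys) v)).
      exact: submx_trans (addsmxSr _ _) h2.
    case/submxP: hvM => D hD.
    have e : M k ys *m c^T = 0 by rewrite -(trmxK (M k ys)) -trmx_mul hc trmx0.
    have : (v *m c^T) 0 0 = 0 by rewrite hD -mulmxA e mulmx0 mxE.
    move=> h; rewrite -[RHS]h mxE; apply: eq_bigr => z _; rewrite !mxE mulrC.
    by [].
  have c0 := hf (fun z => c 0 z) key.
  by move: (c0 j); rewrite /c mxE => h; rewrite h eqxx in hij.
have hfull : row_full (M k ys) by rewrite /row_full hrk hnr.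
have := submx_full (delta_mx 0 z0 : 'rV[R]_r) hfull.
case/submxP => D hD.
exists k, ys, (fun i => D 0 i) => z.
have := congr1 (fun A : 'M[R]_(1,r) => A 0 z) hD; rewrite !mxE /= => ->.
by apply: eq_bigr => i _; rewrite mxE.
Qed.

Lemma dual_sum (R : realType) (Y : Type) (k r : nat) (lam : 'I_k -> R) (xs : 'I_k -> Y)
  (A : 'I_r -> Y -> R) (c : 'I_r)
  (hd : forall z, \sum_(i < k) lam i * A z (xs i) = (z == c)%:R) (G : 'I_r -> R) :
  \sum_(i < k) lam i * (\sum_(z < r) G z * A z (xs i)) = G c.
Proof.
transitivity (\sum_(z < r) G z * \sum_(i < k) lam i * A z (xs i)).
  rewrite (eq_bigr (fun i => \sum_(z < r) lam i * (G z * A z (xs i)))); last first.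
    by move=> i _; rewrite mulr_sumr.
  rewrite exchange_big /=; apply: eq_bigr => z _; rewrite mulr_sumr.
  by apply: eq_bigr => i _; ring.
rewrite (bigD1 c) //= hd eqxx mulr1 big1 ?addr0 // => z /negbTE hz.
by rewrite hd hz mulr0.
Qed.

Lemma sum_delta (R : realType) (r : nat) (a : 'I_r) (g : 'I_r -> R) :
  \sum_(z < r) (z == a)%:R * g z = g a.
Proof.
rewrite (bigD1 a) //= eqxx mul1r big1 ?addr0 // => z /negbTE ->.
by rewrite mul0r.
Qed.

Lemma indep_eq (R : realType) (Y : Type) (r : nat) (f : 'I_r -> Y -> R) a b :
  lin_indep f -> f a =1 f b -> a = b.
Proof.
move=> hf hab; apply/eqP; apply/negPn/negP => hne.
have h := hf (fun z => (z == a)%:R - (z == b)%:R) _ a.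
move: h; rewrite eqxx (negbTE hne) subr0 => h.
suff : (1 : R) = 0 by move/eqP; rewrite oner_eq0.
apply: h => y.
rewrite (eq_bigr (fun z => (z == a)%:R * f z y - (z == b)%:R * f z y)); last first.
  by move=> z _; rewrite mulrBl.
by rewrite sumrB !sum_delta hab subrr.
Qed.

Lemma indep2 (R : realType) (Y : Type) (r : nat) (f : 'I_r -> Y -> R) :
  lin_indep f -> forall c : 'I_r -> 'I_r -> R,
  (forall x y, \sum_(a < r) \sum_(b < r) c a b * (f a x * f b y) = 0) ->
  forall a b, c a b = 0.
Proof.
move=> hf c h a b.
have h1 : forall y a, \sum_(b < r) c a b * f b y = 0.
  move=> y a0; apply: (hf (fun a => \sum_(b < r) c a b * f b y)) => x.
  rewrite -[RHS](h x y); apply: eq_bigr => a' _.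
  by rewrite mulr_suml; apply: eq_bigr => b' _; ring.
by apply: (hf (c a)) => y; apply: h1.
Qed.

Lemma indep_diag (R : realType) (Y : Type) (r : nat) (f : 'I_r -> Y -> R) :
  lin_indep f -> forall d : 'I_r -> R,
  (forall x y, \sum_(a < r) d a * (f a x * f a y) = 0) -> forall a, d a = 0.
Proof.
move=> hf d h a.
have := indep2 hf (c := fun a b => (a == b)%:R * d a) _ a a.
rewrite eqxx mul1r; apply => x y; rewrite -[RHS](h x y); apply: eq_bigr => a' _.
rewrite (bigD1 a') //= eqxx mul1r big1 ?addr0 // => b /negbTE.
by rewrite eq_sym => ->; rewrite mul0r mul0r.
Qed.

Lemma half (R : realType) (Y : Type) (bot : Y) (r r' : nat) (p : 'I_r -> R) (p' : 'I_r' -> R)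
  (A : 'I_r -> Y -> R) (B : 'I_r' -> Y -> R) :
  (forall z, 0 < p z) -> (forall w, 0 < p' w) -> lin_indep A -> lin_indep B ->
  (forall z, A z bot = 1) -> (forall w, B w bot = 1) ->
  (forall x y u, \sum_(z < r) p z * (A z x * A z y * A z u) =
                 \sum_(w < r') p' w * (B w x * B w y * B w u)) ->
  forall c, exists v, B v =1 A c.
Proof.
move=> hp hp' hA hB hAb hBb hT c.
have [k [xs [lam hd]]] := dual hA c.
pose phi (g : Y -> R) := \sum_(i < k) lam i * g (xs i).
have E2 : forall x y, p c * (A c x * A c y) =
    \sum_(w < r') (p' w * phi (B w) * B w y) * B w x.
  move=> x y.
  transitivity (\sum_(i < k) lam i * \sum_(z < r) (p z * (A z x * A z y)) * A z (xs i)).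
    by rewrite (dual_sum hd (fun z => p z * (A z x * A z y))).
  transitivity (\sum_(i < k) lam i * \sum_(w < r') p' w * (B w x * B w y * B w (xs i))).
    apply: eq_bigr => i _; rewrite -hT; congr (_ * _); apply: eq_bigr => z _; ring.
  rewrite (eq_bigr (fun i => \sum_(w < r') lam i * (p' w * (B w x * B w y * B w (xs i)))));
    last by move=> i _; rewrite mulr_sumr.
  rewrite exchange_big /=; apply: eq_bigr => w _.
  rewrite [RHS](_ : _ = \sum_(i < k) (lam i * B w (xs i)) * (p' w * B w y * B w x)).
    by apply: eq_bigr => i _; ring.
  by rewrite -mulr_suml /phi; ring.
have E1 : p c = \sum_(w < r') p' w * phi (B w).
  have := E2 bot bot; rewrite !hAb !mulr1 => ->.
  by apply: eq_bigr => w _; rewrite !hBb !mulr1.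
have [v hv] : exists v, phi (B v) != 0.
  apply: contrapT => hn.
  have h0 : forall w, phi (B w) = 0.
    by move=> w; apply: contrapT => h; apply: hn; exists w; apply/eqP.
  move: E1; rewrite big1 => [h|w _]; last by rewrite h0 mulr0.
  by move: (hp c); rewrite h ltxx.
exists v.
have [k' [us [mu hd']]] := dual hB v.
pose psi (g : Y -> R) := \sum_(j < k') mu j * g (us j).
have E3 : forall y, p c * A c y * psi (A c) = p' v * phi (B v) * B v y.
  move=> y.
  transitivity (\sum_(j < k') mu j * \sum_(w < r') (p' w * phi (B w) * B w y) * B w (us j));
    last by rewrite (dual_sum hd' (fun w => p' w * phi (B w) * B w y)).
  transitivity (\sum_(j < k') mu j * (p c * (A c (us j) * A c y))).
    by rewrite /psi mulr_sumr; apply: eq_bigr => j _; ring.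
  by apply: eq_bigr => j _; rewrite E2.
have hk : p c * psi (A c) = p' v * phi (B v).
  by have := E3 bot; rewrite hAb hBb !mulr1.
have hk0 : p' v * phi (B v) != 0 by rewrite mulf_neq0 // gt_eqF.
move=> y; apply: (mulfI hk0); rewrite -E3 -hk; ring.
Qed.

Lemma core (R : realType) (Y : Type) (bot : Y) (r r' : nat) (p : 'I_r -> R) (p' : 'I_r' -> R)
  (A : 'I_r -> Y -> R) (B : 'I_r' -> Y -> R) :
  (forall z, 0 < p z) -> (forall w, 0 < p' w) -> lin_indep A -> lin_indep B ->
  (forall z, A z bot = 1) -> (forall w, B w bot = 1) ->
  (forall x y u, \sum_(z < r) p z * (A z x * A z y * A z u) =
                 \sum_(w < r') p' w * (B w x * B w y * B w u)) ->
  exists sigma : 'I_r -> 'I_r',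
    [/\ bijective sigma, forall z, p' (sigma z) = p z & forall z, B (sigma z) =1 A z].
Proof.
move=> hp hp' hA hB hAb hBb hT.
have [sigma hs] := fin_all_exists (half hp hp' hA hB hAb hBb hT).
have hT' : forall x y u, \sum_(w < r') p' w * (B w x * B w y * B w u) =
                         \sum_(z < r) p z * (A z x * A z y * A z u).
  by move=> x y u; rewrite hT.
have [tau ht] := fin_all_exists (half hp' hp hB hA hBb hAb hT').
have sinj : injective sigma.
  move=> a b hab; apply: (indep_eq hA) => y.
  by rewrite -hs -hs hab.
have st : forall w, sigma (tau w) = w.
  move=> w; apply: (indep_eq hB) => y; by rewrite hs ht.
have hbij : bijective sigma.
  by exists tau => // z; apply: sinj; rewrite st.
exists sigma; split => //.
have hT2 : forall x y, \sum_(z < r) (p z - p' (sigma z)) * (A z x * A z y) = 0.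
  move=> x y.
  have h2 := hT x y bot.
  have h3 : \sum_(w < r') p' w * (B w x * B w y * B w bot) =
            \sum_(z < r) p' (sigma z) * (A z x * A z y).
    rewrite (reindex sigma) /=; last by apply: onW_bij.
    by apply: eq_bigr => z _; rewrite hBb mulr1 !hs.
  rewrite (eq_bigr (fun z => p z * (A z x * A z y * A z bot) - p' (sigma z) * (A z x * A z y))).
    by rewrite sumrB h2 h3 subrr.
  by move=> z _; rewrite hAb mulr1 mulrBl.
by move=> z; move/eqP: (indep_diag hA hT2 z); rewrite subr_eq0 => /eqP ->.
Qed.

Definition upd (R : realType) (r : nat) (w : nat -> 'I_r -> R) (pi : nat) (g : 'I_r -> R) :=
  fun (i : nat) (a : 'I_r) => if i == pi then w i a * g a else w i a.

Definition TS (R : realType) (r n : nat) (w : nat -> 'I_r -> R)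
  (K : nat -> nat -> 'I_r -> 'I_r -> R) : R :=
  \sum_(z : {ffun 'I_n -> 'I_r})
    ((\prod_(i < n) w i (z i)) * \prod_(i < n) \prod_(j < n | (i < j)%N) K i j (z i) (z j)).

Lemma TS_ext (R : realType) (r n : nat) (w1 w2 : nat -> 'I_r -> R) K :
  (forall i, (i < n)%N -> w1 i =1 w2 i) -> TS n w1 K = TS n w2 K.
Proof.
move=> h; apply: eq_bigr => z _; congr (_ * _); apply: eq_bigr => i _.
by rewrite h.
Qed.

Definition fext (T : Type) (n : nat) (z0 : {ffun 'I_n -> T}) (b : T) : {ffun 'I_n.+1 -> T} :=
  [ffun i : 'I_n.+1 => if @insub _ (fun k => (k < n)%N) 'I_n (nat_of_ord i) is Some j then z0 j else b].

Lemma fext_widen (T : Type) n (z0 : {ffun 'I_n -> T}) b (i : 'I_n) :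
  fext z0 b (widen_ord (leqnSn n) i) = z0 i.
Proof. by rewrite ffunE /= valK. Qed.

Lemma fext_max (T : Type) n (z0 : {ffun 'I_n -> T}) b : fext z0 b ord_max = b.
Proof. by rewrite ffunE insubN //= ltnn. Qed.

Lemma sum_ffunS (R : realType) (T : finType) n (F : {ffun 'I_n.+1 -> T} -> R) :
  \sum_(z : {ffun 'I_n.+1 -> T}) F z =
  \sum_(z0 : {ffun 'I_n -> T}) \sum_(b : T) F (fext z0 b).
Proof.
rewrite pair_big /=.
rewrite (reindex (fun pb : {ffun 'I_n -> T} * T => fext pb.1 pb.2)) //=.
apply: onW_bij.
exists (fun z : {ffun 'I_n.+1 -> T} => ([ffun j => z (widen_ord (leqnSn n) j)], z ord_max)).
  move=> [z0 b] /=; congr pair; last by rewrite fext_max.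
  by apply/ffunP => j; rewrite ffunE fext_widen.
move=> z; apply/ffunP => i; rewrite ffunE.
case: insubP => [j hj hval|hn]; first by rewrite ffunE; congr (z _); apply: val_inj.
congr (z _); apply: val_inj => /=.
by move: (ltn_ord i) hn; rewrite ltnS leq_eqVlt => /orP [/eqP ->|->].
Qed.

Lemma prod_upd (R : realType) (r n : nat) (w : nat -> 'I_r -> R) pi g (z : 'I_n -> 'I_r)
  (hpi : (pi < n)%N) :
  \prod_(i < n) upd w pi g i (z i) =
  (\prod_(i < n) w i (z i)) * g (z (Ordinal hpi)).
Proof.
rewrite (eq_bigr (fun i : 'I_n => w i (z i) * (if nat_of_ord i == pi then g (z i) else 1))); last first.
  by move=> i _; rewrite /upd; case: (_ == _); rewrite ?mulr1.
rewrite big_split /=; congr (_ * _).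
rewrite (bigD1 (Ordinal hpi)) //= eqxx big1 ?mulr1 // => i hi.
case: eqP => // hieq; exfalso; move/eqP: hi; apply; exact: val_inj.
Qed.

Lemma peel (R : realType) (r n : nat) (w : nat -> 'I_r -> R) K pi :
  (pi < n)%N -> (forall i, (i < n)%N -> i != pi -> forall a b, K i n a b = 1) ->
  TS n.+1 w K = TS n (upd w pi (fun a => \sum_(b < r) w n b * K pi n a b)) K.
Proof.
move=> hpi hK; rewrite /TS sum_ffunS; apply: eq_bigr => z0 _.
have HV : forall b, \prod_(i < n.+1) w i (fext z0 b i) = (\prod_(i < n) w i (z0 i)) * w n b.
  move=> b; rewrite big_ord_recr /= fext_max; congr (_ * _).
  by apply: eq_bigr => i _; rewrite fext_widen.
have HE : forall b, \prod_(i < n.+1) \prod_(j < n.+1 | (i < j)%N) K i j (fext z0 b i) (fext z0 b j)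
   = (\prod_(i < n) \prod_(j < n | (i < j)%N) K i j (z0 i) (z0 j)) * K pi n (z0 (Ordinal hpi)) b.
  move=> b; rewrite big_ord_recr /= [X in _ * X]big1; last first.
    by move=> j hj; move: (ltn_ord j); rewrite ltnS leqNgt hj.
  rewrite mulr1.
  rewrite (eq_bigr (fun i : 'I_n => (\prod_(j < n | (i < j)%N) K i j (z0 i) (z0 j)) * K i n (z0 i) b)); last first.
    move=> i _; rewrite big_mkcond big_ord_recr /= ltn_ord fext_max fext_widen.
    congr (_ * _); rewrite [RHS]big_mkcond; apply: eq_bigr => j _ /=.
    by rewrite !fext_widen.
  rewrite big_split /=; congr (_ * _).
  rewrite (bigD1 (Ordinal hpi)) //= big1 ?mulr1 // => i hi.
  apply: hK => //; apply/eqP => hieq; move/eqP: hi; apply; exact: val_inj.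
rewrite prod_upd.
transitivity (\sum_(b < r) ((\prod_(i < n) w i (z0 i)) * (\prod_(i < n) \prod_(j < n | (i < j)%N) K i j (z0 i) (z0 j))) * (w n b * K pi n (z0 (Ordinal hpi)) b)).
  by apply: eq_bigr => b _; rewrite HV HE; ring.
by rewrite -mulr_sumr; ring.
Qed.

Lemma TS1 (R : realType) (r : nat) (w : nat -> 'I_r -> R) K :
  TS 1 w K = \sum_(a < r) w 0%N a.
Proof.
rewrite /TS (reindex (fun a : 'I_r => [ffun _ : 'I_1 => a])) /=; last first.
  apply: onW_bij; exists (fun z : {ffun 'I_1 -> 'I_r} => z ord0) => [a|z]; first by rewrite ffunE.
  by apply/ffunP => i; rewrite !ffunE; congr (z _); apply: val_inj; case: i => [[]].
apply: eq_bigr => a _; rewrite !big_ord1 big1 ?mulr1 ?ffunE //.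
by move=> j; case: j => [[]].
Qed.

Lemma leaves (R : realType) (r m : nat) (w : nat -> 'I_r -> R) K k :
  (forall l, (l < k)%N -> forall i, (i < m.+1 + l)%N -> i != m -> forall a b, K i (m.+1 + l)%N a b = 1) ->
  TS (m.+1 + k) w K =
  TS m.+1 (upd w m (fun b => \prod_(l < k) \sum_(c < r) w (m.+1 + l)%N c * K m (m.+1 + l)%N b c)) K.
Proof.
elim: k w => [|k IH] w hK.
  rewrite addn0; apply: TS_ext => i _ a; rewrite /upd big_ord0 mulr1.
  by case: ifP => // /eqP ->.
rewrite addnS (@peel _ _ _ _ _ m); last 2 first.
- by rewrite ltnS leq_addr.
- by move=> i hi him a b; apply: (hK k).
rewrite IH; last first.
  by move=> l hl i hi him a b; apply: hK => //; apply: ltnW.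
apply: TS_ext => i hi a; rewrite /upd.
case: eqP => [->|//]; rewrite big_ord_recr /=.
have e : forall l, ((m.+1 + l)%N == m) = false.
  by move=> l; rewrite gtn_eqF // addSn ltnS leq_addr.
rewrite -mulrA; congr (_ * _); rewrite mulrC; congr (_ * _).
by apply: eq_bigr => l _; apply: eq_bigr => c _; rewrite e.
Qed.

Lemma block (R : realType) (r m Q pi : nat) (w : nat -> 'I_r -> R) K :
  (pi < m)%N -> (forall i, (i < m)%N -> i != pi -> forall a b, K i m a b = 1) ->
  (forall l, (l < Q)%N -> forall i, (i < m.+1 + l)%N -> i != m -> forall a b, K i (m.+1 + l)%N a b = 1) ->
  TS (m.+1 + Q) w K =
  TS m (upd w pi (fun a => \sum_(b < r) w m b * K pi m a b *
      \prod_(l < Q) \sum_(c < r) w (m.+1 + l)%N c * K m (m.+1 + l)%N b c)) K.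
Proof.
move=> hpi hK0 hK1; rewrite leaves // (@peel _ _ _ _ _ pi) //.
apply: TS_ext => i hi a; rewrite /upd eqxx.
have -> : (i == m) = false by apply/negbTE; rewrite ltn_eqF.
case: eqP => // _; congr (_ * _); apply: eq_bigr => b _; ring.
Qed.

Definition Gx (R : realType) (r : nat) (F : 'I_r -> 'I_r -> R -> R) a b (o : option R) : R :=
  if o is Some v then F a b v else 1.

Definition Aext (R : realType) (r : nat) (p : 'I_r -> R) (F : 'I_r -> 'I_r -> R -> R)
  (Q : nat) (a : 'I_r) (yy : nat -> option R) : R :=
  \sum_(c < r) p c * Gx F a c (yy 0%N) * \prod_(l < Q) \sum_(d < r) p d * Gx F c d (yy l.+1).

Lemma Fq_Aext (R : realType) (r : nat) (p : 'I_r -> R) (F : 'I_r -> 'I_r -> R -> R) q' z x :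
  @Fq R r p F q' z x = Aext p F q' z (fun k => Some (x (inord k))).
Proof.
pose w (i : nat) (a : 'I_r) := if i == 0%N then p a * F z a (x ord0) else p a.
pose K (i j : nat) (a b : 'I_r) := if i == 0%N then F a b (x (inord j)) else 1.
have -> : @Fq R r p F q' z x = TS (0.+1 + q') w K.
  rewrite /Fq /TS; apply: eq_bigr => zz _.
  rewrite !big_ord_recl /= [X in _ = _ * (_ * X)]big1 ?mulr1; last first.
    by move=> i _; rewrite big1 // => j _; rewrite /K /bump.
  rewrite /w /bump /= -!mulrA; congr (_ * _); rewrite mulrCA; congr (_ * _).
  congr (_ * _); apply: eq_bigr => j _.
  by rewrite /K /= inord_val.
rewrite leaves; last by move=> l hl i hi; rewrite /K; case: (i == 0%N).
rewrite TS1 /Aext; apply: eq_bigr => a _.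
have h0 : inord 0 = ord0 :> 'I_q'.+1 by apply: val_inj; rewrite /= inordK.
by rewrite /upd /w /= h0; congr (_ * _).
Qed.

Lemma cvg_bsum (R : realType) (I : Type) (xs : seq I) (P : pred I) (f : I -> R -> R) (l : I -> R) :
  (forall i, f i s @[s --> +oo] --> l i) ->
  \sum_(i <- xs | P i) f i s @[s --> +oo] --> \sum_(i <- xs | P i) l i.
Proof.
move=> h; elim: xs => [|x xs IH].
  have -> : (fun s => \sum_(i <- [::] | P i) f i s) = (fun _ => 0).
    by apply/funext => s; rewrite big_nil.
  by rewrite big_nil; apply: cvg_cst.
have -> : (fun s => \sum_(i <- x :: xs | P i) f i s) =
   (fun s => (if P x then f x s else 0) + \sum_(i <- xs | P i) f i s).
  by apply/funext => s; rewrite big_cons; case: (P x); rewrite ?add0r.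
rewrite big_cons; case: (P x).
  by apply: cvgD => //; apply: h.
rewrite -[X in _ --> X]add0r; apply: cvgD => //; exact: cvg_cst.
Qed.

Lemma cvg_bprod (R : realType) (I : Type) (xs : seq I) (P : pred I) (f : I -> R -> R) (l : I -> R) :
  (forall i, f i s @[s --> +oo] --> l i) ->
  \prod_(i <- xs | P i) f i s @[s --> +oo] --> \prod_(i <- xs | P i) l i.
Proof.
move=> h; elim: xs => [|x xs IH].
  have -> : (fun s => \prod_(i <- [::] | P i) f i s) = (fun _ => 1).
    by apply/funext => s; rewrite big_nil.
  by rewrite big_nil; apply: cvg_cst.
have -> : (fun s => \prod_(i <- x :: xs | P i) f i s) =
   (fun s => (if P x then f x s else 1) * \prod_(i <- xs | P i) f i s).
  by apply/funext => s; rewrite big_cons; case: (P x); rewrite ?mul1r.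
rewrite big_cons; case: (P x).
  by apply: cvgM => //; apply: h.
rewrite -[X in _ --> X]mul1r; apply: cvgM => //; exact: cvg_cst.
Qed.

Lemma cvg_TS (R : realType) (r n : nat) (w : nat -> 'I_r -> R)
  (Ks : R -> nat -> nat -> 'I_r -> 'I_r -> R) K :
  (forall i j a b, Ks s i j a b @[s --> +oo] --> K i j a b) ->
  TS n w (Ks s) @[s --> +oo] --> TS n w K.
Proof.
move=> h; apply: cvg_bsum => z; apply: cvgM; first exact: cvg_cst.
by apply: cvg_bprod => i; apply: cvg_bprod => j; apply: h.
Qed.

Lemma Aext_bot (R : realType) (r : nat) (p : 'I_r -> R) (F : 'I_r -> 'I_r -> R -> R) Q a :
  \sum_(c < r) p c = 1 -> Aext p F Q a (fun _ => None) = 1.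
Proof.
move=> hs; rewrite /Aext /= -[RHS]hs; apply: eq_bigr => c _.
rewrite mulr1 big1 ?mulr1 // => l _.
by rewrite -[RHS]hs; apply: eq_bigr => d _; rewrite mulr1.
Qed.

Lemma Aext_indep (R : realType) (r : nat) (p : 'I_r -> R) (F : 'I_r -> 'I_r -> R -> R) q' Q :
  \sum_(c < r) p c = 1 -> (q' <= Q)%N -> Fq_lin_indep p F q' ->
  lin_indep (fun z (yy : nat -> option R) => Aext p F Q z yy).
Proof.
move=> hs hq hind c hc; apply: hind => x.
rewrite -[RHS](hc (fun k => if (k <= q')%N then Some (x (inord k)) else None)).
apply: eq_bigr => z _; congr (_ * _); rewrite Fq_Aext /Aext.
apply: eq_bigr => c' _; congr (_ * _).
rewrite -(subnKC hq) big_split_ord /= [X in _ = _ * X]big1 ?mulr1.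
  by apply: eq_bigr => l _; rewrite ltn_ord.
move=> l _; rewrite -[RHS]hs; apply: eq_bigr => d _.
by rewrite leqNgt ltnS leq_addr /= mulr1.
Qed.

Definition xc (R : realType) (Q : nat) (t : option R) (y : nat -> nat -> option R) (i j : nat) : option R :=
  if j == 1%N then (if i == 0%N then t else None)
  else if (2 <= j)%N then
    (if ((j - 2) %% Q.+1 == 0)%N
     then (if i == (if ((j - 2) %/ Q.+1 == 3)%N then 1%N else 0%N) then y ((j - 2) %/ Q.+1)%N 0%N else None)
     else (if i == (j - (j - 2) %% Q.+1)%N then y ((j - 2) %/ Q.+1)%N ((j - 2) %% Q.+1)%N else None))
  else None.

Lemma xc_1 (R : realType) Q (t : option R) y i : xc Q t y i 1 = if i == 0%N then t else None.
Proof. by []. Qed.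

Lemma xc_hub (R : realType) Q (t : option R) y i b :
  xc Q t y i (2 + b * Q.+1) = if i == (if b == 3%N then 1%N else 0%N) then y b 0%N else None.
Proof.
rewrite /xc.
have -> : (2 + b * Q.+1 == 1)%N = false by lia.
have -> : (2 <= 2 + b * Q.+1)%N by lia.
by rewrite addKn mulnK // modnMl eqxx.
Qed.

Lemma xc_leaf (R : realType) Q (t : option R) y i b l : (l < Q)%N ->
  xc Q t y i ((2 + b * Q.+1).+1 + l) = if i == (2 + b * Q.+1)%N then y b l.+1 else None.
Proof.
move=> hl.
have e : ((2 + b * Q.+1).+1 + l - 2 = b * Q.+1 + l.+1)%N by lia.
rewrite /xc.
have -> : ((2 + b * Q.+1).+1 + l == 1)%N = false by lia.
have -> : (2 <= (2 + b * Q.+1).+1 + l)%N by lia.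
rewrite e divnMDl // modnMDl divn_small ?modn_small ?ltnS // addn0 /=.
by have -> : ((2 + b * Q.+1).+1 + l - l.+1 = 2 + b * Q.+1)%N by lia.
Qed.

Definition Kc (R : realType) (r : nat) (F : 'I_r -> 'I_r -> R -> R) Q (t : option R) y :=
  fun i j a b => Gx F a b (xc Q t y i j).

Lemma upd_eq (R : realType) (r : nat) (w : nat -> 'I_r -> R) pi g g' :
  (forall a, g a = g' a) -> forall i a, upd w pi g i a = upd w pi g' i a.
Proof. by move=> h i a; rewrite /upd h. Qed.

Lemma block_cfg (R : realType) (r : nat) (p : 'I_r -> R) (F : 'I_r -> 'I_r -> R -> R) Q t y
  (w : nat -> 'I_r -> R) b :
  (b <= 3)%N -> (forall j, (2 <= j)%N -> forall a, w j a = p a) ->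
  TS ((2 + b * Q.+1).+1 + Q) w (Kc F Q t y) =
  TS (2 + b * Q.+1) (upd w (if b == 3%N then 1%N else 0%N) (fun a => Aext p F Q a (y b))) (Kc F Q t y).
Proof.
move=> hb hw.
rewrite (@block _ _ _ _ (if b == 3%N then 1%N else 0%N)).
- apply: TS_ext => i _ a; apply: upd_eq => a'.
  rewrite /Aext; apply: eq_bigr => c _.
  rewrite hw; last by lia.
  rewrite /Kc xc_hub eqxx; congr (_ * _).
  apply: eq_bigr => l _; apply: eq_bigr => d _.
  by rewrite hw ?xc_leaf // ?eqxx //; lia.
- by case: ifP => _; lia.
- by move=> i hi hne a c; rewrite /Kc xc_hub (negbTE hne).
- by move=> l hl i hi hne a c; rewrite /Kc xc_leaf // (negbTE hne).
Qed.

Definition ycfg (R : realType) (y0 y1 y2 y3 : nat -> option R) : nat -> nat -> option R :=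
  fun b => if b == 0%N then y0 else if b == 1%N then y1 else if b == 2%N then y2 else y3.

Definition Ufun (R : realType) (r : nat) (p : 'I_r -> R) (F : 'I_r -> 'I_r -> R -> R) Q
  (t : option R) (y0 y1 y2 y3 : nat -> option R) : R :=
  \sum_(a < r) p a * Aext p F Q a y2 * Aext p F Q a y1 * Aext p F Q a y0 *
     \sum_(b < r) p b * Aext p F Q b y3 * Gx F a b t.

Lemma config (R : realType) (r : nat) (p : 'I_r -> R) (F : 'I_r -> 'I_r -> R -> R) Q t y0 y1 y2 y3 :
  TS (2 + 4 * Q.+1) (fun _ => p) (Kc F Q t (ycfg y0 y1 y2 y3)) = Ufun p F Q t y0 y1 y2 y3.
Proof.
have -> : (2 + 4 * Q.+1 = (2 + 3 * Q.+1).+1 + Q)%N by lia.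
rewrite (@block_cfg _ _ p) //.
have -> : (2 + 3 * Q.+1 = (2 + 2 * Q.+1).+1 + Q)%N by lia.
rewrite (@block_cfg _ _ p) //; last first.
  by move=> j hj a; rewrite /upd; have -> : (j == 1%N) = false by lia.
have -> : (2 + 2 * Q.+1 = (2 + 1 * Q.+1).+1 + Q)%N by lia.
rewrite (@block_cfg _ _ p) //; last first.
  move=> j hj a; rewrite /upd; have -> : (j == 1%N) = false by lia.
  by have -> : (j == 0%N) = false by lia.
have -> : (2 + 1 * Q.+1 = (2 + 0 * Q.+1).+1 + Q)%N by lia.
rewrite (@block_cfg _ _ p) //; last first.
  move=> j hj a; rewrite /upd; have -> : (j == 1%N) = false by lia.
  by have -> : (j == 0%N) = false by lia.
rewrite mul0n addn0 (@peel _ _ 1 _ _ 0) //; last first.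
  by move=> i; rewrite ltnS leqn0 => /eqP ->.
rewrite TS1 /Ufun; apply: eq_bigr => a _.
by rewrite /upd /Kc /=.
Qed.

Lemma lim_eq (R : realType) (f g : R -> R) (l1 l2 : R) :
  f = g -> f x @[x --> +oo] --> l1 -> g x @[x --> +oo] --> l2 -> l1 = l2.
Proof.
move=> -> h1 h2.
by rewrite -(cvg_lim (@Rhausdorff R) h1) (cvg_lim (@Rhausdorff R) h2).
Qed.

Lemma U_limit (R : realType) (r : nat) (p : 'I_r -> R) (F : 'I_r -> 'I_r -> R -> R) Q t y0 y1 y2 y3 :
  (forall z1 z2, is_cdf (F z1 z2)) ->
  (fun s => edge_cdf p F (fun i j : 'I_(2 + 4 * Q.+1) => odflt s (xc Q t (ycfg y0 y1 y2 y3) i j)))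
    x @[x --> +oo] --> Ufun p F Q t y0 y1 y2 y3.
Proof.
move=> hcdf; rewrite -config.
apply: (@cvg_TS _ _ _ _ (fun s i j a b => F a b (odflt s (xc Q t (ycfg y0 y1 y2 y3) i j)))).
move=> i j a b; rewrite /Kc /Gx.
case: (xc Q t (ycfg y0 y1 y2 y3) i j) => [v|] /=; first exact: cvg_cst.
by case: (hcdf a b).
Qed.

Lemma U_T (R : realType) (r : nat) (p : 'I_r -> R) (F : 'I_r -> 'I_r -> R -> R) Q y0 y1 y2 :
  \sum_(c < r) p c = 1 ->
  Ufun p F Q None y0 y1 y2 (fun _ => None) =
  \sum_(a < r) p a * (Aext p F Q a y2 * Aext p F Q a y1 * Aext p F Q a y0).
Proof.
move=> hs; rewrite /Ufun; apply: eq_bigr => a _.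
have -> : \sum_(b < r) p b * Aext p F Q b (fun _ => None) * Gx F a b None = 1.
  by rewrite -[RHS]hs; apply: eq_bigr => b _; rewrite Aext_bot //= !mulr1.
by rewrite mulr1 !mulrA.
Qed.

Lemma U_S (R : realType) (r : nat) (p : 'I_r -> R) (F : 'I_r -> 'I_r -> R -> R) Q s y0 y3 :
  \sum_(c < r) p c = 1 ->
  Ufun p F Q (Some s) y0 (fun _ => None) (fun _ => None) y3 =
  \sum_(a < r) \sum_(b < r) (p a * p b * F a b s) * (Aext p F Q a y0 * Aext p F Q b y3).
Proof.
move=> hs; rewrite /Ufun; apply: eq_bigr => a _.
rewrite !Aext_bot // !mulr1 mulr_sumr; apply: eq_bigr => b _ /=; ring.
Qed.

Unset Implicit Arguments.
Local Close Scope classical_set_scope.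
Local Open Scope ring_scope.

Theorem proposition1 (R : realType)
    (r : nat) (p : 'I_r -> R) (F : 'I_r -> 'I_r -> R -> R)
    (r' : nat) (p' : 'I_r' -> R) (F' : 'I_r' -> 'I_r' -> R -> R) :
  wsbm_assumptions p F ->
  wsbm_assumptions p' F' ->
  (forall (n : nat) (x : 'I_n -> 'I_n -> R), edge_cdf p F x = edge_cdf p' F' x) ->
  r = r' /\
  exists sigma : 'I_r -> 'I_r',
    [/\ bijective sigma,
        (forall z, p' (sigma z) = p z) &
        (forall z1 z2, F' (sigma z1) (sigma z2) = F z1 z2)].
Proof.
move=> [[hp hs hcdf hsym] [q1 hi1]] [[hp' hs' hcdf' hsym'] [q2 hi2]] heq.
pose Q := maxn q1 q2.
have hA := Aext_indep hs (leq_maxl q1 q2) hi1.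
have hB := Aext_indep hs' (leq_maxr q1 q2) hi2.
have hU : forall t y0 y1 y2 y3, Ufun p F Q t y0 y1 y2 y3 = Ufun p' F' Q t y0 y1 y2 y3.
  move=> t y0 y1 y2 y3.
  have c1 := @U_limit R r p F Q t y0 y1 y2 y3 hcdf.
  have c2 := @U_limit R r' p' F' Q t y0 y1 y2 y3 hcdf'.
  eapply lim_eq; [| exact: c1 | exact: c2].
  by apply/funext => s; apply: heq.
have hT : forall x y u,
    \sum_(z < r) p z * (Aext p F Q z x * Aext p F Q z y * Aext p F Q z u) =
    \sum_(w < r') p' w * (Aext p' F' Q w x * Aext p' F' Q w y * Aext p' F' Q w u).
  by move=> x y u; rewrite -U_T // -U_T // hU.
have [sigma [hbij hps hAs]] := core (bot := fun _ => None) hp hp' hA hB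
   (fun z => @Aext_bot R r p F Q z hs) (fun w => @Aext_bot R r' p' F' Q w hs') hT.
split.
  by have := bij_eq_card hbij; rewrite !card_ord.
exists sigma; split => // z1 z2; apply/funext => s.
have hc := indep2 hA (c := fun a b => p a * p b * (F a b s - F' (sigma a) (sigma b) s)).
have : p z1 * p z2 * (F z1 z2 s - F' (sigma z1) (sigma z2) s) = 0.
  apply: hc => y0 y3.
  have := hU (Some s) y0 (fun _ => None) (fun _ => None) y3.
  rewrite U_S // U_S // => e.
  transitivity (\sum_(a < r) \sum_(b < r) (p a * p b * F a b s) * (Aext p F Q a y0 * Aext p F Q b y3) -
     \sum_(a < r) \sum_(b < r) (p a * p b * F' (sigma a) (sigma b) s) * (Aext p F Q a y0 * Aext p F Q b y3)).
    rewrite -sumrB; apply: eq_bigr => a _; rewrite -sumrB; apply: eq_bigr => b _; ring.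
  apply/eqP; rewrite subr_eq0; apply/eqP; rewrite e.
  rewrite (reindex sigma) /=; last by apply: onW_bij.
  apply: eq_bigr => a _; rewrite (reindex sigma) /=; last by apply: onW_bij.
  by apply: eq_bigr => b _; rewrite !hps !hAs.
move/eqP; rewrite !mulf_eq0 (gt_eqF (hp z1)) (gt_eqF (hp z2)) /= subr_eq0.
by move/eqP ->.
Qed.
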